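(* Let $V=\bigoplus_{i\in I}B_i$ be a near vector space over a commutative $F$ with $I$ finite, where the $B_i$ are the blocks of $V$. Then for every $\Delta\subseteq I$ the subset $\bigoplus_{i\in\Delta}B_i\subseteq V$ is definable by a quantifier-free formula (of $\mathcal L_{\bar F nvs}$).
   Context: A near vector space $(V,F)$: $(V,+)$ a group, $F$ a set of endomorphisms containing $0,1,-1$, with $F\setminus\{0\}$ a subgroup of $\mathrm{Aut}(V,+)$ acting fixed point freely ($\alpha x=\beta x\Rightarrow\alpha=\beta$ or $x=0$), such that the quasi-kernel $Q(V)=\{u:\forall\alpha,\beta\in F\,\exists\gamma\in F\ \alpha u+\beta u=\gamma u\}$ generates $V$. Commutative: $\alpha(\beta v)=\beta(\alpha v)$. The blocks of $V$ are the summands in André's decomposition of $V$ into maximal regular near vector subspaces (regular: any two nonzero quasi-kernel elements $u,v$ satisfy $u+\lambda v\in Q(V)$ for some $\lambda\neq0$), each nonzero element of $Q(V)$ lying in exactly one block. $\bar F$ is the set of formal finite sums $\alpha_1+_\cdot\cdots+_\cdot\alpha_n$ of elements of $F$ acting by $v\mapsto\alpha_1(v)+\cdots+\alpha_n(v)$. $\mathcal L_{\bar Fnvs}=\{+,0,(\lambda)_{\lambda\in\bar F}\}$, with each unary function symbol interpreted as the corresponding action; each such function is quantifier-free definable from $\mathcal L_{Fnvs}=\{+,0,(\lambda)_{\lambda\in F}\}$. *)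

(* Defs.v *)
From HB Require Import structures.
From mathcomp Require Import all_boot all_order all_algebra.
From Stdlib Require List.
Set Implicit Arguments. Unset Strict Implicit. Unset Printing Implicit Defensive.
Import GRing.Theory.
Local Open Scope ring_scope.

(* The additive group (V,+) is taken to be a zmodType (abelian): this is
   forced by the axioms, since v |-> -v lies in F\{0} <= Aut(V,+).
   F is a set of maps V -> V (a predicate on functions). *)

Section NVS.
Variable V : zmodType.
Variable F : (V -> V) -> Prop.

Definition zero_map : V -> V := fun _ => 0.

Definition nvs_scalars : Prop :=
  [/\ F zero_map, F id, F (fun v => - v),
      (forall a, F a -> forall x y, a (x + y) = a x + a y)
    & (forall a b x, F a -> F b -> a x = b x -> a = b \/ x = 0)] /\
  [/\ (forall a, F a -> a <> zero_map -> bijective a),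
      (forall a b, F a -> F b -> a <> zero_map -> b <> zero_map ->
         F (a \o b))
    & (forall a, F a -> a <> zero_map ->
         exists2 b, F b & cancel a b /\ cancel b a)].

Definition subgroup (W : V -> Prop) : Prop :=
  [/\ W 0, (forall x y, W x -> W y -> W (x + y)) & (forall x, W x -> W (- x))].

Definition generates (S W : V -> Prop) : Prop :=
  (forall x, S x -> W x) /\
  (forall H : V -> Prop, subgroup H -> (forall x, S x -> H x) ->
     forall x, W x -> H x).

Definition quasi_kernel (W : V -> Prop) (u : V) : Prop :=
  W u /\ forall a b, F a -> F b -> exists2 c, F c & a u + b u = c u.

Definition fullset : V -> Prop := fun _ => True.

Definition near_vector_space : Prop :=
  nvs_scalars /\ generates (quasi_kernel fullset) fullset.

Definition commutative_scalars : Prop :=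
  forall a b, F a -> F b -> forall v, a (b v) = b (a v).

Definition nv_subspace (W : V -> Prop) : Prop :=
  [/\ subgroup W, (forall a w, F a -> W w -> W (a w))
    & generates (quasi_kernel W) W].

Definition regular (W : V -> Prop) : Prop :=
  forall u v, quasi_kernel W u -> quasi_kernel W v -> u <> 0 -> v <> 0 ->
    exists l, [/\ F l, l <> zero_map & quasi_kernel W (u + l v)].

Definition max_regular_subspace (W : V -> Prop) : Prop :=
  [/\ nv_subspace W, regular W &
      forall W', nv_subspace W' -> regular W' ->
        (forall x, W x -> W' x) -> forall x, W' x -> W x].

Definition internal_direct_sum (I : finType) (B : I -> V -> Prop) : Prop :=
  (forall v, exists b : I -> V, (forall i, B i (b i)) /\ v = \sum_i b i) /\
  (forall b b' : I -> V, (forall i, B i (b i)) -> (forall i, B i (b' i)) ->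
     \sum_i b i = \sum_i b' i -> forall i, b i = b' i).

Definition block_decomposition (I : finType) (B : I -> V -> Prop) : Prop :=
  (forall i, max_regular_subspace (B i)) /\ internal_direct_sum B.

Definition sub_sum (I : finType) (B : I -> V -> Prop) (D : {set I}) (v : V)
  : Prop :=
  exists b : I -> V, [/\ forall i, B i (b i),
                        forall i, i \notin D -> b i = 0 & v = \sum_(i in D) b i].

(* Language L_{bar F nvs}: terms in the single variable x, built from 0, +
   and unary symbols lambda in bar F (formal finite sums of elements of F,
   represented by a list of elements of F). *)
Inductive term : Type :=
  | TVar : term
  | TZero : term
  | TAdd : term -> term -> term
  | TAct : seq (V -> V) -> term -> term.

Inductive qf_formula : Type :=
  | QTrue : qf_formula
  | QEq : term -> term -> qf_formula
  | QNot : qf_formula -> qf_formula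
  | QAnd : qf_formula -> qf_formula -> qf_formula
  | QOr : qf_formula -> qf_formula -> qf_formula.

Fixpoint term_wf (t : term) : Prop :=
  match t with
  | TVar | TZero => True
  | TAdd t1 t2 => term_wf t1 /\ term_wf t2
  | TAct l t1 => (forall a, List.In a l -> F a) /\ term_wf t1
  end.

Fixpoint formula_wf (f : qf_formula) : Prop :=
  match f with
  | QTrue => True
  | QEq t1 t2 => term_wf t1 /\ term_wf t2
  | QNot g => formula_wf g
  | QAnd g h | QOr g h => formula_wf g /\ formula_wf h
  end.

Definition barF_act (l : seq (V -> V)) (v : V) : V := \sum_(a <- l) a v.

Fixpoint term_eval (t : term) (x : V) : V :=
  match t with
  | TVar => x
  | TZero => 0
  | TAdd t1 t2 => term_eval t1 x + term_eval t2 x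
  | TAct l t1 => barF_act l (term_eval t1 x)
  end.

Fixpoint formula_holds (f : qf_formula) (x : V) : Prop :=
  match f with
  | QTrue => True
  | QEq t1 t2 => term_eval t1 x = term_eval t2 x
  | QNot g => ~ formula_holds g x
  | QAnd g h => formula_holds g x /\ formula_holds h x
  | QOr g h => formula_holds g x \/ formula_holds h x
  end.

Definition qf_definable (S : V -> Prop) : Prop :=
  exists f : qf_formula, formula_wf f /\ forall x, formula_holds f x <-> S x.

End NVS.

(* Main.v *)
Require Import Defs.
From mathcomp Require Import all_boot all_order all_algebra.
From Stdlib Require Import Classical FunctionalExtensionality.
Set Implicit Arguments. Unset Strict Implicit. Unset Printing Implicit Defensive.
Import GRing.Theory.
Local Open Scope ring_scope.

Section Proof.
Variable V : zmodType.
Variable F : (V -> V) -> Prop.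
Hypothesis HS : nvs_scalars F.
Hypothesis Hcomm : commutative_scalars F.

Lemma F_add a : F a -> forall x y, a (x + y) = a x + a y.
Proof. move: HS; rewrite /nvs_scalars => -[[_ _ _ H _] _]; exact: H. Qed.

Lemma F_0 a : F a -> a 0 = 0.
Proof. move=> Fa; have := F_add Fa 0 0; rewrite addr0 => /eqP.
by rewrite -{1}[a 0]addr0 => /eqP /addrI. Qed.

Lemma F_N a : F a -> forall x, a (- x) = - a x.
Proof. move=> Fa x; apply/eqP; rewrite -addr_eq0 -F_add // addNr F_0 //. Qed.

Lemma F_fpf a b x : F a -> F b -> a x = b x -> a = b \/ x = 0.
Proof. by move: HS; rewrite /nvs_scalars => -[[_ _ _ _ H] _] Fa Fb /(H _ _ _ Fa Fb). Qed.

Lemma F_id : F id. Proof. by move: HS; rewrite /nvs_scalars => -[[_ H _ _ _] _]. Qed.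
Lemma F_zero : F ((@zero_map V)). Proof. by move: HS; rewrite /nvs_scalars => -[[H _ _ _ _] _]. Qed.
Lemma F_neg : F (fun v => - v). Proof. by move: HS; rewrite /nvs_scalars => -[[_ _ H _ _] _]. Qed.

Lemma F_inv a : F a -> a <> (@zero_map V) -> exists2 b, F b & cancel a b /\ cancel b a.
Proof. by move: HS; rewrite /nvs_scalars => -[_ [_ _ H]]; apply: H. Qed.

Lemma negF k : F k -> F (fun x => - k x).
Proof.
move=> Fk.
have [->|nk] := classic (k = (@zero_map V)).
  have -> : (fun x : V => - (@zero_map V) x) = (@zero_map V).
    by apply: functional_extensionality => x; rewrite /zero_map oppr0.
  exact: F_zero.
have [hn|nn] := classic ((fun v : V => - v) = (@zero_map V)).
  have -> : (fun x : V => - k x) = (@zero_map V).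
    apply: functional_extensionality => x.
    by have := congr1 (fun f => f (k x)) hn.
  exact: F_zero.
move: HS; rewrite /nvs_scalars => -[_ [_ H _]].
exact: (H (fun v => - v) k F_neg Fk nn nk).
Qed.

Lemma nv_sub W : nv_subspace F W -> subgroup W.
Proof. by case. Qed.

Lemma qk_scal W l v : nv_subspace F W -> F l -> quasi_kernel F W v ->
  quasi_kernel F W (l v).
Proof.
move=> [_ HW _] Fl [Wv Hv]; split; first exact: HW.
move=> a b Fa Fb; have [g Fg e] := Hv a b Fa Fb; exists g => //.
by rewrite (Hcomm Fa Fl) (Hcomm Fb Fl) -F_add // e (Hcomm Fg Fl).
Qed.

Lemma uniform W u v a b g h : nv_subspace F W -> regular F W ->
  quasi_kernel F W u -> quasi_kernel F W v -> u <> 0 -> v <> 0 ->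
  F a -> F b -> F g -> F h -> a u + b u = g u -> a v + b v = h v -> g = h.
Proof.
move=> nW rW Qu Qv nu nv Fa Fb Fg Fh eu ev.
have [l [Fl nl Qw]] := rW u v Qu Qv nu nv.
set v' := l v.
have nv' : v' <> 0.
  move=> e; case: (F_fpf (x:=v) Fl F_zero e) => //.
have ev' : a v' + b v' = h v'.
  by rewrite /v' (Hcomm Fa Fl) (Hcomm Fb Fl) -F_add // ev (Hcomm Fh Fl).
have Qv' : quasi_kernel F W v' by exact: qk_scal.
case: Qw => _ Hw; have [k Fk ew] := Hw a b Fa Fb.
have E : g u - k u = k v' - h v'.
  move: ew; rewrite (F_add Fa) (F_add Fb) (F_add Fk) addrACA eu ev' => H.
  rewrite -[g u](addrK (h v')) H.
  by rewrite addrAC [k u + k v']addrC addrK.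
have [e1|ne1] := classic (g u = k u).
  case: (F_fpf Fg Fk e1) => // egk; subst k.
  move: E; rewrite subrr => /eqP; rewrite eq_sym subr_eq0 => /eqP e2.
  by case: (F_fpf Fg Fh e2).
case: Qu => _ Hu; have [c Fc ec] := Hu g _ Fg (negF Fk).
case: Qv' => _ Hv'; have [d Fd ed] := Hv' k _ Fk (negF Fh).
have cne : c <> (@zero_map V).
  by move=> ec0; apply: ne1; apply/eqP; rewrite -subr_eq0 ec ec0.
have [c' Fc' [cK cK']] := F_inv Fc cne.
have ecu : c u = d v' by rewrite -ec -ed.
have eu' : u = c' (d v') by rewrite -ecu cK.
have : a u + b u = h u.
  by rewrite eu' !(Hcomm Fa Fc') !(Hcomm Fb Fc') -F_add // (Hcomm Fa Fd)
    (Hcomm Fb Fd) -F_add // ev' (Hcomm Fd Fh) (Hcomm Fc' Fh).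
rewrite eu => /(F_fpf Fg Fh); case=> //.
Qed.

Lemma allQ W : nv_subspace F W -> regular F W -> forall x, W x -> quasi_kernel F W x.
Proof.
move=> nW rW; have [[W0 WD WN] HW [_ Gen]] := nW.
apply: (Gen (quasi_kernel F W)) => //.
split.
- split=> // a b Fa Fb; exists id; first exact: F_id.
  by rewrite (F_0 Fa) (F_0 Fb) addr0.
- move=> x y [Wx Hx] [Wy Hy]; split; first exact: WD.
  move=> a b Fa Fb.
  have [g Fg ex] := Hx a b Fa Fb; have [h Fh ey] := Hy a b Fa Fb.
  have [x0|nx] := classic (x = 0); first by subst x; rewrite add0r; exists h.
  have [y0|ny] := classic (y = 0); first by subst y; rewrite addr0; exists g.
  have gh : g = h by apply: (uniform nW rW (conj Wx Hx) (conj Wy Hy) nx ny Fa Fb).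
  subst h; exists g => //.
  by rewrite (F_add Fa) (F_add Fb) (F_add Fg) addrACA ex ey.
- move=> x [Wx Hx]; split; first exact: WN.
  move=> a b Fa Fb; have [g Fg ex] := Hx a b Fa Fb; exists g => //.
  by rewrite (F_N Fa) (F_N Fb) (F_N Fg) -opprD ex.
Qed.

Variable I : finType.
Variable B : I -> V -> Prop.
Hypothesis Hmax : forall i, max_regular_subspace F (B i).
Hypothesis Hdir : internal_direct_sum B.

Lemma Bnv i : nv_subspace F (B i). Proof. by case: (Hmax i). Qed.
Lemma Breg i : regular F (B i). Proof. by case: (Hmax i). Qed.
Lemma B0 i : B i 0. Proof. by case: (Bnv i) => [[H _ _] _ _]. Qed.
Lemma BD i x y : B i x -> B i y -> B i (x + y). Proof. by case: (Bnv i) => [[_ H _] _ _]; apply: H. Qed.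
Lemma BN i x : B i x -> B i (- x). Proof. by case: (Bnv i) => [[_ _ H] _ _]; apply: H. Qed.
Lemma BF i a x : F a -> B i x -> B i (a x). Proof. by case: (Bnv i) => _ H _; apply: H. Qed.

Arguments Bnv : clear implicits.
Arguments Breg : clear implicits.
Arguments B0 : clear implicits.

Lemma sep i j : i != j -> forall b0, B j b0 -> b0 <> 0 ->
  exists a b g h y z, [/\ F a, F b, F g & F h] /\
   [/\ B i y, B j z, y <> 0 & z <> 0] /\
   [/\ a y + b y = g y, a z + b z = h z & g <> h].
Proof.
move=> nij b0 Bb0 nb0; apply: NNPP => Hn.
have Hall : forall a b g h y z, F a -> F b -> F g -> F h -> B i y -> B j z ->
    y <> 0 -> z <> 0 -> a y + b y = g y -> a z + b z = h z -> g = h.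
  move=> a b g h y z Fa Fb Fg Fh By Bz ny nz ey ez; apply: NNPP => ngh; apply: Hn.
  by exists a, b, g, h, y, z; split; split.
pose W' x := exists y z, [/\ B i y, B j z & x = y + z].
have QW : forall x, W' x -> forall a b, F a -> F b -> exists2 c, F c & a x + b x = c x.
  move=> x [y [z [By Bz ->]]] a b Fa Fb.
  have [_ Hy] := allQ (Bnv i) (Breg i) By; have [_ Hz] := allQ (Bnv j) (Breg j) Bz.
  have [g Fg ey] := Hy a b Fa Fb; have [h Fh ez] := Hz a b Fa Fb.
  have [y0|ny] := classic (y = 0); first by subst y; rewrite add0r; exists h.
  have [z0|nz] := classic (z = 0); first by subst z; rewrite addr0; exists g.
  have gh := Hall a b g h y z Fa Fb Fg Fh By Bz ny nz ey ez; subst h.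
  exists g => //.
  by rewrite (F_add Fa) (F_add Fb) (F_add Fg) addrACA ey ez.
have sgW : subgroup W'.
  split.
  - by exists 0, 0; rewrite addr0; split=> //; apply: B0.
  - move=> _ _ [y [z [By Bz ->]]] [y' [z' [By' Bz' ->]]].
    by exists (y + y'), (z + z'); split; [apply: BD|apply: BD|rewrite addrACA].
  - move=> _ [y [z [By Bz ->]]]; exists (- y), (- z).
    by split; [apply: BN|apply: BN|rewrite opprD].
have nvW : nv_subspace F W'.
  split=> //.
  - move=> a _ Fa [y [z [By Bz ->]]]; exists (a y), (a z).
    by split; [apply: BF|apply: BF|rewrite (F_add Fa)].
  - split; first by move=> x [].
    move=> H sgH subH _ [y [z [By Bz ->]]].
    have [H0 HD HN] := sgH; apply: HD.
    + have [_ Gen] := (let: And3 _ _ g := Bnv i in g).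
      apply: (Gen H) => // u [Bu Hu]; apply: subH; split=> //.
      by exists u, 0; rewrite addr0; split=> //; apply: B0.
    + have [_ Gen] := (let: And3 _ _ g := Bnv j in g).
      apply: (Gen H) => // u [Bu Hu]; apply: subH; split=> //.
      by exists 0, u; rewrite add0r; split=> //; apply: B0.
have rW : regular F W'.
  move=> u v [Wu _] [Wv _] nu nv; exists id; split.
  - exact: F_id.
  - by move=> e; apply: nu; have := congr1 (fun f => f u) e.
  - have Wuv : W' (u + v) by case: sgW => _ HD _; apply: HD.
    by split=> //; apply: QW.
have : B i b0.
  case: (Hmax i) => _ _ Hm; apply: (Hm W') => //.
    by move=> x Bx; exists x, 0; rewrite addr0; split=> //; apply: B0.
  by exists 0, b0; rewrite add0r; split=> //; apply: B0.
move=> Bib0; apply: nb0.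
pose f1 := fun k => if k == i then b0 else 0.
pose f2 := fun k => if k == j then b0 else 0.
have s1 : \sum_k f1 k = b0.
  rewrite (bigD1 i) //= /f1 eqxx big1 ?addr0 // => k /negbTE -> //.
have s2 : \sum_k f2 k = b0.
  rewrite (bigD1 j) //= /f2 eqxx big1 ?addr0 // => k /negbTE -> //.
have := (proj2 Hdir) f1 f2.
have H1 : forall k, B k (f1 k) by move=> k; rewrite /f1; case: eqP => [->|_] //; apply: B0.
have H2 : forall k, B k (f2 k) by move=> k; rewrite /f2; case: eqP => [->|_] //; apply: B0.
move=> /(_ H1 H2); rewrite s1 s2 => /(_ erefl i).
by rewrite /f1 /f2 eqxx (negbTE nij).
Qed.

Definition layer := (seq (V -> V) * seq (V -> V))%type.
Definition layerT (L : layer) (t : term V) : term V :=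
  TAdd (TAct L.1 t) (TAct [:: fun v => - v] (TAct L.2 t)).
Definition actL (L : layer) (v : V) : V := barF_act L.1 v - barF_act L.2 v.
Definition compT (Ls : seq layer) (t : term V) := foldr layerT t Ls.
Definition compA (Ls : seq layer) (v : V) := foldr actL v Ls.
Definition wfl (l : seq (V -> V)) := forall a, List.In a l -> F a.
Definition wfL (L : layer) := wfl L.1 /\ wfl L.2.

Lemma barF_nil (v : V) : barF_act (V:=V) [::] v = 0. Proof. by rewrite /barF_act big_nil. Qed.
Lemma barF_cons (a : V -> V) l (v : V) : barF_act (a :: l) v = a v + barF_act l v.
Proof. by rewrite /barF_act big_cons. Qed.

Lemma barF_add l : wfl l -> forall x y, barF_act l (x + y) = barF_act l x + barF_act l y.
Proof.
elim: l => [|a l IH] wf x y; first by rewrite !barF_nil addr0.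
have Fa : F a by apply: wf; left.
rewrite !barF_cons IH; last by move=> b Hb; apply: wf; right.
by rewrite (F_add Fa) addrACA.
Qed.

Lemma barF_0 l : wfl l -> barF_act l 0 = 0.
Proof.
elim: l => [|a l IH] wf; first by rewrite barF_nil.
have Fa : F a by apply: wf; left.
by rewrite barF_cons (F_0 Fa) add0r IH // => b Hb; apply: wf; right.
Qed.

Lemma barF_B k l x : wfl l -> B k x -> B k (barF_act l x).
Proof.
elim: l => [|a l IH] wf Bx; first by rewrite barF_nil; apply: B0.
have Fa : F a by apply: wf; left.
rewrite barF_cons; apply: BD; first exact: BF.
by apply: IH => // b Hb; apply: wf; right.
Qed.

Lemma actL_add L : wfL L -> forall x y, actL L (x + y) = actL L x + actL L y.
Proof.
case=> w1 w2 x y; rewrite /actL (barF_add w1) (barF_add w2).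
by rewrite opprD addrACA.
Qed.

Lemma actL_0 L : wfL L -> actL L 0 = 0.
Proof. by case=> w1 w2; rewrite /actL (barF_0 w1) (barF_0 w2) subrr. Qed.

Lemma actL_B k L x : wfL L -> B k x -> B k (actL L x).
Proof. by case=> w1 w2 Bx; rewrite /actL; apply: BD; [|apply: BN]; apply: barF_B. Qed.

Lemma compA_add Ls : List.Forall wfL Ls -> forall x y, compA Ls (x + y) = compA Ls x + compA Ls y.
Proof.
elim: Ls => [|L Ls IH] wf x y //=; inversion wf; subst.
by rewrite IH // actL_add.
Qed.

Lemma compA_0 Ls : List.Forall wfL Ls -> compA Ls 0 = 0.
Proof.
elim: Ls => [|L Ls IH] wf //=; inversion wf; subst.
by rewrite IH // actL_0.
Qed.

Lemma compA_B k Ls x : List.Forall wfL Ls -> B k x -> B k (compA Ls x).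
Proof.
elim: Ls => [|L Ls IH] wf Bx //=; inversion wf; subst.
by apply: actL_B => //; apply: IH.
Qed.

Lemma compT_eval Ls x : term_eval (compT Ls (TVar V)) x = compA Ls x.
Proof.
elim: Ls => [|L Ls IH] //=.
by rewrite IH /actL barF_cons barF_nil addr0.
Qed.

Lemma compT_wf Ls : List.Forall wfL Ls -> term_wf F (compT Ls (TVar V)).
Proof.
elim: Ls => [|L Ls IH] wf //=; inversion wf; subst.
case: H1 => w1 w2.
split; split => //; try exact: IH.
- by move=> a [<-|[]]; apply: F_neg.
- by split => //; apply: IH.
Qed.

Lemma proj_exists j b0 : B j b0 -> b0 <> 0 -> forall s : seq I,
  exists Ls, [/\ List.Forall wfL Ls,
    (forall i, i \in s -> i != j -> forall v, B i v -> compA Ls v = 0) &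
    (forall v, B j v -> compA Ls v = 0 -> v = 0)].
Proof.
move=> Bb0 nb0; elim=> [|i s [Ls [wf Hk Hi]]].
  by exists [::]; split=> //.
have [eij|nij] := eqVneq i j.
  exists Ls; split=> // k; rewrite inE => /orP [/eqP ->|ks]; first by rewrite eij eqxx.
  exact: Hk.
have [a [b [g [h [y [z [[Fa Fb Fg Fh] [[By Bz ny nz] [ey ez ngh]]]]]]]]] :=
  sep nij Bb0 nb0.
pose L : layer := ([:: a; b], [:: g]).
have wL : wfL L.
  split=> c /=; first by case=> [<-|[<-|[]]].
  by case=> [<-|[]].
have actE w : actL L w = a w + b w - g w.
  by rewrite /actL /= !barF_cons !barF_nil !addr0.
exists (L :: Ls); split.
- by constructor.
- move=> k; rewrite inE => /orP [/eqP ->|ks] nkj v Bv /=.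
    have Bw : B i (compA Ls v) by apply: compA_B.
    set w := compA Ls v in Bw *.
    rewrite actE.
    have [w0|nw] := classic (w = 0); first by rewrite w0 (F_0 Fa) (F_0 Fb) (F_0 Fg) subr0 addr0.
    have [_ Hw] := allQ (Bnv i) (Breg i) Bw.
    have [g' Fg' ew] := Hw a b Fa Fb.
    have gg := uniform (Bnv i) (Breg i) (allQ (Bnv i) (Breg i) By)
      (allQ (Bnv i) (Breg i) Bw) ny nw Fa Fb Fg Fg' ey ew.
    by rewrite ew gg subrr.
  by rewrite (Hk k ks nkj v Bv) actL_0.
- move=> v Bv /=.
  have Bw : B j (compA Ls v) by apply: compA_B.
  set w := compA Ls v in Bw *.
  rewrite actE => e.
  have [w0|nw] := classic (w = 0); first by apply: Hi.
  have [_ Hw] := allQ (Bnv j) (Breg j) Bw.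
  have [h' Fh' ew] := Hw a b Fa Fb.
  have hh := uniform (Bnv j) (Breg j) (allQ (Bnv j) (Breg j) Bz)
    (allQ (Bnv j) (Breg j) Bw) nz nw Fa Fb Fh Fh' ez ew.
  move: e; rewrite ew -hh => /eqP; rewrite subr_eq0 => /eqP e.
  by case: (F_fpf Fh Fg e) => [/esym|].
Qed.

Lemma sum_compA Ls (bb : I -> V) j : List.Forall wfL Ls ->
  (forall i, B i (bb i)) ->
  (forall i, i != j -> compA Ls (bb i) = 0) ->
  compA Ls (\sum_i bb i) = compA Ls (bb j).
Proof.
move=> wf Bb Hk.
rewrite (big_morph (compA Ls) (compA_add wf) (compA_0 wf)).
rewrite (bigD1 j) //= big1 ?addr0 // => i nij; exact: Hk.
Qed.

Lemma formula_exists (D : {set I}) (s : seq I) : exists f, formula_wf F f /\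
  forall x, formula_holds f x <-> (forall bb : I -> V, (forall i, B i (bb i)) ->
     x = \sum_i bb i -> forall j, j \in s -> j \notin D -> bb j = 0).
Proof.
elim: s => [|j s [f [wf Hf]]].
  by exists (QTrue V); split=> // x; split=> // _ bb _ _ j.
have [jD|njD] := boolP (j \in D).
  exists f; split=> // x; rewrite Hf; split=> H bb Bb ex k ks kD.
    move: ks; rewrite inE => /orP [/eqP ek|ks]; last exact: H.
    by move: kD; rewrite ek jD.
  by apply: H => //; rewrite inE ks orbT.
have [[b0 [Bb0 nb0]]|nt] := classic (exists b0, B j b0 /\ b0 <> 0); last first.
  exists f; split=> // x; rewrite Hf; split=> H bb Bb ex k ks kD.
    move: ks; rewrite inE => /orP [/eqP ek|ks]; last exact: H.
    subst k; apply: NNPP => nz; apply: nt; exists (bb j); split=> //.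
  by apply: H => //; rewrite inE ks orbT.
have [Ls [wLs Hk Hi]] := proj_exists Bb0 nb0 (enum I).
exists (QAnd (QEq (compT Ls (TVar V)) (TZero V)) f); split.
  by split=> //; split=> //; apply: compT_wf.
move=> x /=; rewrite compT_eval Hf; split.
  move=> [e H] bb Bb ex k; rewrite inE => /orP [/eqP ->|ks] kD; last exact: H.
  apply: Hi => //; rewrite -(sum_compA (j:=j) wLs Bb) -?ex //.
  move=> i nij; have hin : i \in enum I by rewrite mem_enum.
  exact: (Hk i hin nij _ (Bb i)).
move=> H; split; last first.
  by move=> bb Bb ex k ks kD; apply: H => //; rewrite inE ks orbT.
have [bb [Bb ex]] := (proj1 Hdir) x.
rewrite ex (sum_compA (j:=j) wLs Bb).
  by rewrite (H bb Bb ex j) ?inE ?eqxx // compA_0.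
move=> i nij; have hin : i \in enum I by rewrite mem_enum.
exact: (Hk i hin nij _ (Bb i)).
Qed.
End Proof.

Theorem mainTheorem15 (V : zmodType) (F : (V -> V) -> Prop)
  (I : finType) (B : I -> V -> Prop) :
  near_vector_space F -> commutative_scalars F ->
  block_decomposition F B ->
  forall D : {set I}, qf_definable F (sub_sum B D).
Proof.
move=> [HS _] Hc [Hmax Hdir] D.
have [f [wf Hf]] := formula_exists HS Hc Hmax Hdir D (enum I).
exists f; split=> // x; rewrite Hf.
have split_sum : forall b : I -> V, (forall i, i \notin D -> b i = 0) ->
    \sum_i b i = \sum_(i in D) b i.
  move=> b Hb; rewrite (bigID (mem D)) /= [X in _ + X]big1 ?addr0 //.
split.
  move=> H; have [bb [Bb ex]] := (proj1 Hdir) x.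
  exists bb; split=> //.
    by move=> j jD; apply: (H bb Bb ex j) => //; rewrite mem_enum.
  by rewrite ex split_sum // => j jD; apply: (H bb Bb ex j) => //; rewrite mem_enum.
move=> [b [Bb Hb ->]] bb Bbb ex j _ jD.
have := (proj2 Hdir) b bb Bb Bbb.
by rewrite -ex split_sum // => /(_ erefl j) <-; apply: Hb.
Qed.
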